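(* Let $M\in\mathrm{rep}\,G_{2,n}$ and $I\in\mathbb{I}_{2,n}$. Then exactly one of the following holds, and $\bar d^{ss}_M(I)$ is given by the corresponding formula. (a) $I$ is a rectangle with source $s$ and sink $t$: $\bar d^{ss}_M(I)=\operatorname{rank}M(s\to t)$. (b) $I=[b_1,d_1]_1\sqcup[b_2,d_2]_2$ with $b_2<b_1\le d_2=d_1$, so $I$ has sources $s_1=(1,b_1)$, $s_2=(2,b_2)$ and sink $t_2=(2,d_2)$: $$\bar d^{ss}_M(I)=\operatorname{rank}M(s_2\to t_2)+\operatorname{rank}M(s_1\to t_2)-\operatorname{rank}\begin{bmatrix}M(s_2\to t_2) & M(s_1\to t_2)\end{bmatrix}.$$ (c) $I=[b_1,d_1]_1\sqcup[b_2,d_2]_2$ with $b_2=b_1\le d_2<d_1$, so $I$ has source $s_1=(1,b_1)$ and sinks $t_1=(1,d_1)$, $t_2=(2,d_2)$: $$\bar d^{ss}_M(I)=\operatorname{rank}M(s_1\to t_2)+\operatorname{rank}M(s_1\to t_1)-\operatorname{rank}\begin{bmatrix}M(s_1\to t_2)\\ M(s_1\to t_1)\end{bmatrix}.$$ (d) $I=[b_1,d_1]_1\sqcup[b_2,d_2]_2$ with $b_2<b_1\le d_2<d_1$, so $I$ has sources $s_1=(1,b_1)$, $s_2=(2,b_2)$ and sinks $t_1=(1,d_1)$, $t_2=(2,d_2)$: $$\bar d^{ss}_M(I)=\operatorname{rank}\begin{bmatrix}M(s_2\to t_2) & M(s_1\to t_2)\\ 0 & M(s_1\to t_1)\end{bmatrix}+\operatorname{rank}M(s_1\to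 t_2)-\operatorname{rank}\begin{bmatrix}M(s_1\to t_2)\\ M(s_1\to t_1)\end{bmatrix}-\operatorname{rank}\begin{bmatrix}M(s_2\to t_2) & M(s_1\to t_2)\end{bmatrix}.$$ Here block matrices denote the linear maps $M(s_2)\oplus M(s_1)\to M(t_2)$, $M(s_1)\to M(t_2)\oplus M(t_1)$, and $M(s_2)\oplus M(s_1)\to M(t_2)\oplus M(t_1)$ respectively.
   Context: Fix a field $K$. $G_{2,n}$ is the equioriented commutative $2\times n$ grid: the quiver with vertex set $\{(i,j):1\le i\le 2,\ 1\le j\le n\}$ and arrows $(i,j)\to(i,j+1)$ and $(1,j)\to(2,j)$, bound by all commutativity relations; $\mathrm{rep}\,G_{2,n}$ is its category of finite-dimensional representations. For vertices $s,t$ with a path from $s$ to $t$, $M(s\to t)$ is the composite linear map along any such path. An interval of $G_{2,n}$ is a nonempty full subquiver $I$ which is connected (as an undirected graph) and convex (whenever $x,y\in I_0$ and there are paths $x\to z$, $z\to y$, then $z\in I_0$); $\mathbb{I}_{2,n}$ is the set of intervals. Every interval has staircase form $\bigsqcup_{i=s}^t[b_i,d_i]_i$ with vertex set $\{(i,x):s\le i\le t,\ b_i\le x\le d_i\}$, $1\le s\le t\le 2$ and $b_2\le b_1\le d_2\le d_1$ when $s=1,t=2$; a rectangle is an interval with one row, or with $b_1=b_2$ and $d_1=d_2$. The interval representation $V_I$ has $K$ on $I$, $0$ elsewhere, identity maps inside $I$, zero otherwise. $I^{ss}_0$ is the set of sources and sinks of the quiver $I$. $KG_{2,n}$ is the $K$-linear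 category whose objects are vertices and morphisms are $K$-linear combinations of paths modulo commutativity relations; $\mathcal{C}^{ss}_I$ is its full subcategory on $I^{ss}_0$, $M^{ss}_I:=M|_{\mathcal{C}^{ss}_I}$, and $\bar d^{ss}_M(I)$ is the multiplicity of the indecomposable $(V_I)^{ss}_I$ as a direct summand of $M^{ss}_I$. *)

(* Defs.v *)
From HB Require Import structures.
From mathcomp Require Import all_boot all_order all_algebra.
Set Implicit Arguments. Unset Strict Implicit. Unset Printing Implicit Defensive.
Import GRing.Theory.
Local Open Scope ring_scope.

(* Rows: the paper's row 1 is [grow1], row 2 is [grow2].
   Columns: the paper's column j (1 <= j <= n) is the ordinal j-1 : 'I_n. *)
Definition grow1 : 'I_2 := @Ordinal 2 0 isT.
Definition grow2 : 'I_2 := @Ordinal 2 1 isT.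

Definition vtx (n : nat) := ('I_2 * 'I_n)%type.

Definition arrow (n : nat) : rel (vtx n) := fun x y =>
  ((x.1 == y.1) && (nat_of_ord y.2 == (nat_of_ord x.2).+1)) ||
  [&& x.1 == grow1, y.1 == grow2 & x.2 == y.2].

Definition reach (n : nat) : rel (vtx n) := connect (@arrow n).

Definition is_interval (n : nat) (I : {set vtx n}) : Prop :=
  I != set0 /\
  (forall x y, x \in I -> y \in I ->
     connect (fun u v => [&& u \in I, v \in I & arrow u v || arrow v u]) x y) /\
  (forall x y z, x \in I -> y \in I -> reach x z -> reach z y -> z \in I).

Definition Iss (n : nat) (I : {set vtx n}) : {set vtx n} :=
  [set x in I | [forall y in I, ~~ arrow y x] || [forall y in I, ~~ arrow x y]].

Definition rowI (n : nat) (i : 'I_2) (b d : 'I_n) : {set vtx n} :=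
  [set x : vtx n | (x.1 == i) && (b <= x.2 <= d)%N].
Definition stair (n : nat) (b1 d1 b2 d2 : 'I_n) : {set vtx n} :=
  rowI grow1 b1 d1 :|: rowI grow2 b2 d2.

Definition is_rect (n : nat) (I : {set vtx n}) : Prop :=
  (exists (i : 'I_2) (b d : 'I_n), (b <= d)%N /\ I = rowI i b d) \/
  (exists b d : 'I_n, (b <= d)%N /\ I = stair b d b d).
Definition caseB (n : nat) (I : {set vtx n}) : Prop :=
  exists b1 d1 b2 d2 : 'I_n, [&& (b2 < b1)%N, (b1 <= d2)%N & d2 == d1] /\ I = stair b1 d1 b2 d2.
Definition caseC (n : nat) (I : {set vtx n}) : Prop :=
  exists b1 d1 b2 d2 : 'I_n, [&& b2 == b1, (b1 <= d2)%N & (d2 < d1)%N] /\ I = stair b1 d1 b2 d2.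
Definition caseD (n : nat) (I : {set vtx n}) : Prop :=
  exists b1 d1 b2 d2 : 'I_n, [&& (b2 < b1)%N, (b1 <= d2)%N & (d2 < d1)%N] /\ I = stair b1 d1 b2 d2.

Definition exactly_one4 (P Q R S : Prop) : Prop :=
  (P \/ Q \/ R \/ S) /\
  ~ (P /\ Q) /\ ~ (P /\ R) /\ ~ (P /\ S) /\ ~ (Q /\ R) /\ ~ (Q /\ S) /\ ~ (R /\ S).

(* Representations of G_{2,n} (column-vector convention: a linear map
   V -> W is a matrix 'M_(dim W, dim V)).  Dimensions are indexed by nat
   columns; data at columns >= n is irrelevant (never used). *)
Record grep (K : fieldType) (n : nat) := GRep {
  gdim : 'I_2 -> nat -> nat;
  hmap : forall (i : 'I_2) (j : nat), 'M[K]_(gdim i j.+1, gdim i j);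
  vmap : forall j : nat, 'M[K]_(gdim grow2 j, gdim grow1 j);
  gcomm : forall j : nat, (j.+1 < n)%N ->
            vmap j.+1 *m hmap grow1 j = hmap grow2 j *m vmap j
}.

Section Paths.
Variables (K : fieldType) (n : nat) (M : grep K n).

Fixpoint hcomp (i : 'I_2) (j k : nat) : 'M[K]_(gdim M i (k + j), gdim M i j) :=
  match k with
  | 0 => 1%:M
  | k'.+1 => hmap M i (k' + j) *m hcomp i j k'
  end.

(* M(x -> y): composite along a path from x to y (go right in row x.1,
   then down if needed); meaningful when reach x y. *)
Definition Mpath (x y : vtx n) : 'M[K]_(gdim M y.1 y.2, gdim M x.1 x.2) :=
  let k := (nat_of_ord y.2 - nat_of_ord x.2)%N in
  if x.1 == y.1 then conform_mx 0 (hcomp x.1 x.2 k)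
  else conform_mx 0 (vmap M (k + x.2) *m hcomp grow1 x.2 k).

Definition Mdim (x : vtx n) : nat := gdim M x.1 x.2.
End Paths.

(* Representations of the full subcategory of K G_{2,n} on a vertex set S:
   a space at each object and a map for each (class of) path x -> y,
   functorially. *)
Definition is_ssfunctor (K : fieldType) (n : nat) (S : {set vtx n})
  (d : vtx n -> nat) (f : forall x y : vtx n, 'M[K]_(d y, d x)) : Prop :=
  (forall x, x \in S -> f x x = 1%:M) /\
  (forall x y z, x \in S -> y \in S -> z \in S -> reach x y -> reach y z ->
     f y z *m f x y = f x z).

Definition ss_iso (K : fieldType) (n : nat) (S : {set vtx n})
  (d : vtx n -> nat) (f : forall x y : vtx n, 'M[K]_(d y, d x))
  (d' : vtx n -> nat) (f' : forall x y : vtx n, 'M[K]_(d' y, d' x)) : Prop :=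
  exists (phi : forall x, 'M[K]_(d' x, d x)) (psi : forall x, 'M[K]_(d x, d' x)),
    (forall x, x \in S -> phi x *m psi x = 1%:M /\ psi x *m phi x = 1%:M) /\
    (forall x y, x \in S -> y \in S -> reach x y -> phi y *m f x y = f' x y *m phi x).

(* ((V_I)^{ss}_I)^{⊕ m} is a direct summand of the representation (d,f) on
   S = I^{ss}_0 (S ⊆ I, so (V_I)^{ss}_I is K at each object of S with identity
   maps): (d,f) ≅ (V_I)^{ss,⊕m} ⊕ Y for some representation Y. *)
Definition pow_summand (K : fieldType) (n : nat) (S : {set vtx n})
  (d : vtx n -> nat) (f : forall x y : vtx n, 'M[K]_(d y, d x)) (m : nat) : Prop :=
  exists (dY : vtx n -> nat) (fY : forall x y : vtx n, 'M[K]_(dY y, dY x)),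
    is_ssfunctor S fY /\
    ss_iso S f (fun x y => block_mx (1%:M : 'M[K]_m) 0 0 (fY x y)).

(* \bar d^{ss}_M(I) = m : the multiplicity of (V_I)^{ss}_I as a direct summand
   of M^{ss}_I is m (largest power that is a direct summand). *)
Definition dbar_ss_is (K : fieldType) (n : nat) (M : grep K n) (I : {set vtx n}) (m : nat) : Prop :=
  pow_summand (Iss I) (Mpath M) m /\ ~ pow_summand (Iss I) (Mpath M) m.+1.

Definition dbar_ss_eq (K : fieldType) (n : nat) (M : grep K n) (I : {set vtx n}) (z : int) : Prop :=
  exists m : nat, dbar_ss_is M I m /\ (m%:Z = z).

(* Main.v *)
Require Import Defs.
From HB Require Import structures.
From mathcomp Require Import all_boot all_order all_algebra.
From mathcomp Require Import zify ring.
Import GRing.Theory.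

Set Implicit Arguments. Unset Strict Implicit. Unset Printing Implicit Defensive.

Section Comb.
Variable n : nat.
Implicit Types (x y z : vtx n).

Lemma arrowE x y : arrow x y =
  ((nat_of_ord x.1 == nat_of_ord y.1) && (nat_of_ord y.2 == (nat_of_ord x.2).+1)) ||
  [&& nat_of_ord x.1 == 0, nat_of_ord y.1 == 1 & nat_of_ord x.2 == nat_of_ord y.2].
Proof. by []. Qed.

Lemma stairE b1 d1 b2 d2 x : (x \in stair b1 d1 b2 d2) =
  ((nat_of_ord x.1 == 0) && (b1 <= x.2 <= d1)) || ((nat_of_ord x.1 == 1) && (b2 <= x.2 <= d2)).
Proof. by rewrite /stair /rowI !inE. Qed.

Lemma rowIE i b d x : (x \in rowI i b d) = (nat_of_ord x.1 == nat_of_ord i) && (b <= x.2 <= d).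
Proof. by rewrite /rowI !inE. Qed.

Definition predO (j : 'I_n) : 'I_n := Ordinal (leq_ltn_trans (leq_subr 1 j) (ltn_ord j)).
Definition succO (j d : 'I_n) (h : j < d) : 'I_n := Ordinal (leq_ltn_trans h (ltn_ord d)).

Lemma IssE (I : {set vtx n}) x : x \in Iss I =
  (x \in I) && ([forall y in I, ~~ arrow y x] || [forall y in I, ~~ arrow x y]).
Proof. by rewrite /Iss inE. Qed.

Lemma pairE (i : 'I_2) (j : 'I_n) (i' : 'I_2) (j' : 'I_n) :
  ((i, j) == (i', j')) = (i == i' :> nat) && (j == j' :> nat).
Proof. by []. Qed.

Section Stair.
Variables (b1 d1 b2 d2 : 'I_n).
Hypothesis (h1 : b2 <= b1) (h2 : b1 <= d2) (h3 : d2 <= d1).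
Let I := stair b1 d1 b2 d2.

Lemma nin (i : 'I_2) (j : 'I_n) : (i, j) \in I ->
  [forall y in I, ~~ arrow y (i, j)] =
  ~~ (((nat_of_ord i == 0) && (b1 < j)) || ((nat_of_ord i == 1) && ((b2 < j) || (b1 <= j)))).
Proof.
rewrite /I stairE /= => hI; have hi := ltn_ord i.
apply/idP/idP.
  move/forall_inP => H; apply/negP => hh.
  have [/andP [i0 hj] | hh2] := boolP ((nat_of_ord i == 0) && (b1 < j)).
    have := H (i, predO j); rewrite stairE arrowE /=; lia.
  have [hj|hj] := boolP (b2 < j).
    have := H (i, predO j); rewrite stairE arrowE /=; lia.
  have := H (grow1, j); rewrite stairE arrowE /=; lia.
move=> hh; apply/forall_inP => [[i' j']]; rewrite stairE arrowE /=.
have := ltn_ord i'; lia.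
Qed.

Lemma nout (i : 'I_2) (j : 'I_n) : (i, j) \in I ->
  [forall y in I, ~~ arrow (i, j) y] =
  ~~ (((nat_of_ord i == 0) && ((j < d1) || (j <= d2))) || ((nat_of_ord i == 1) && (j < d2))).
Proof.
rewrite /I stairE /= => hI; have hi := ltn_ord i.
apply/idP/idP.
  move/forall_inP => H; apply/negP => hh.
  have [hj | hj] := boolP (j <= d2).
    have [i0 | i1] := boolP (nat_of_ord i == 0).
      have := H (grow2, j); rewrite stairE arrowE /=; lia.
    have hj2 : j < d2 by lia.
    have := H (i, succO hj2); rewrite stairE arrowE /=; lia.
  have hj2 : j < d1 by lia.
  have := H (i, succO hj2); rewrite stairE arrowE /=; lia.
move=> hh; apply/forall_inP => [[i' j']]; rewrite stairE arrowE /=.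
have := ltn_ord i'; lia.
Qed.

Lemma Iss_stair x : x \in Iss I =
  [|| x == (grow1, b1), (x == (grow1, d1)) && (d2 < d1),
      (x == (grow2, b2)) && (b2 < b1) | x == (grow2, d2)].
Proof.
case: x => i j; rewrite IssE !pairE /=.
have hi := ltn_ord i.
have [hI | hI] := boolP ((i, j) \in I).
  rewrite nin // nout //; move: hI; rewrite /I stairE /=; lia.
move: hI; rewrite /I stairE /=; lia.
Qed.
End Stair.

Lemma Iss_row (i0 : 'I_2) (b d : 'I_n) x : b <= d -> x \in Iss (rowI i0 b d) =
  (x == (i0, b)) || (x == (i0, d)).
Proof.
move=> hbd; case: x => i j; rewrite IssE !pairE.
have hi := ltn_ord i; have hi0 := ltn_ord i0.
have [hI | hI] := boolP ((i, j) \in rowI i0 b d); last by move: hI; rewrite rowIE /=; lia.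
rewrite /=; move: hI; rewrite rowIE /= => hI.
have -> : [forall y in rowI i0 b d, ~~ arrow y (i, j)] = (nat_of_ord j == b).
  apply/idP/idP.
    move/forall_inP => H; apply/negPn/negP => hh.
    have := H (i, predO j); rewrite rowIE arrowE /=; lia.
  move=> hh; apply/forall_inP => [[i' j']]; rewrite rowIE arrowE /=.
  have := ltn_ord i'; lia.
have -> : [forall y in rowI i0 b d, ~~ arrow (i, j) y] = (nat_of_ord j == d).
  apply/idP/idP.
    move/forall_inP => H; apply/negPn/negP => hh.
    have hj2 : j < d by lia.
    have := H (i, succO hj2); rewrite rowIE arrowE /=; lia.
  move=> hh; apply/forall_inP => [[i' j']]; rewrite rowIE arrowE /=.
  have := ltn_ord i'; lia.
lia.
Qed.

Lemma reach_le x y : reach x y -> (x.1 <= y.1) && (x.2 <= y.2).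
Proof.
move/connectP => [p pth ->]; elim: p x pth => [|z p IH] x /=; first by rewrite !leqnn.
move/andP => [axz pz]; have := IH z pz; move: axz; rewrite arrowE.
have := ltn_ord x.1; have := ltn_ord z.1; move: (last z p) => w; move: (nat_of_ord x.1) (nat_of_ord x.2) (nat_of_ord z.1) (nat_of_ord z.2) (nat_of_ord w.1) (nat_of_ord w.2) => a b c e f g. lia.
Qed.

Lemma reach_row (i : 'I_2) (a c : 'I_n) : a <= c -> reach (i, a) (i, c).
Proof.
move=> hac; have [k hk] : exists k, nat_of_ord c = a + k by exists (c - a); lia.
elim: k c hac hk => [|k IH] c hac hk.
  have -> : c = a by apply: ord_inj; rewrite /= hk addn0.
  exact: connect0.
have hc : a + k < n by have := ltn_ord c; lia.
apply: (connect_trans (IH (Ordinal hc) _ _)) => /=; [lia | done |].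
apply: connect1; rewrite arrowE /=; lia.
Qed.

Lemma reach_down (j : 'I_n) : reach (grow1, j) (grow2, j).
Proof. by apply: connect1; rewrite arrowE /= !eqxx. Qed.

Lemma reach_first (I : {set vtx n}) x y : is_interval I -> x \in I -> y \in I ->
  reach x y -> x != y -> exists2 z, z \in I & arrow x z.
Proof.
move=> [_ [_ cv]] xI yI /connectP [p pth ey] nxy.
case: p pth ey => [|z p] /=; first by move=> _ e; rewrite e eqxx in nxy.
move=> /andP [axz pz] ey; exists z => //.
apply: (cv x y z xI yI); first exact: connect1.
by rewrite ey; apply/connectP; exists p.
Qed.

Lemma reach_last (I : {set vtx n}) x y : is_interval I -> x \in I -> y \in I ->
  reach x y -> x != y -> exists2 z, z \in I & arrow z y.
Proof.
move=> [_ [_ cv]] xI yI /connectP [p pth ey] nxy.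
case/lastP: p pth ey => [|p z]; first by move=> _ /= e; rewrite e eqxx in nxy.
rewrite rcons_path last_rcons => /andP [pp az] ey; subst z.
exists (last x p) => //.
apply: (cv x y _ xI yI); last exact: connect1.
by apply/connectP; exists p.
Qed.

Lemma Iss_chain (I : {set vtx n}) x y z : is_interval I ->
  x \in Iss I -> y \in Iss I -> z \in Iss I -> reach x y -> reach y z ->
  x = y \/ y = z.
Proof.
move=> hI; rewrite !IssE => /andP [xI _] /andP [yI hy] /andP [zI _] rxy ryz.
have [->|nxy] := eqVneq x y; first by left.
have [->|nyz] := eqVneq y z; first by right.
have [w wI awy] := reach_last hI xI yI rxy nxy.
have [w' w'I ayw'] := reach_first hI yI zI ryz nyz.
move: hy => /orP [/forall_inP H | /forall_inP H].
  by have := H w wI; rewrite awy.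
by have := H w' w'I; rewrite ayw'.
Qed.

Lemma ord2 (i : 'I_2) : i = grow1 \/ i = grow2.
Proof.
case: i => [[|[|//]]] hi; [left|right]; exact: ord_inj.
Qed.

Lemma row_convex (I : {set vtx n}) (i : 'I_2) (a j c : 'I_n) : is_interval I ->
  (i, a) \in I -> (i, c) \in I -> a <= j <= c -> (i, j) \in I.
Proof.
move=> [_ [_ cv]] ha hc /andP [h1 h2].
by apply: (cv _ _ _ ha hc); apply: reach_row.
Qed.

Lemma cross_col (I : {set vtx n}) x y : x \in I -> y \in I ->
  connect (fun u v => [&& u \in I, v \in I & arrow u v || arrow v u]) x y ->
  nat_of_ord x.1 = 0 -> nat_of_ord y.1 = 1 ->
  exists j : 'I_n, ((grow1, j) \in I) && ((grow2, j) \in I).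
Proof.
move=> xI yI /connectP [p pth ey]; elim: p x xI pth ey => [|z p IH] x xI /=.
  by move=> _ -> ->.
move=> /andP [/and3P [_ zI azx] pz] ey x0 y1.
have hz := ltn_ord z.1.
have [z0|z1] : nat_of_ord z.1 = 0 \/ nat_of_ord z.1 = 1 by lia.
  exact: IH z zI pz ey z0 y1.
exists x.2; apply/andP; split.
  case: x xI x0 {azx pz ey} => i j /= xI i0.
  have ei : i = grow1 by apply: ord_inj.
  by rewrite -ei.
case: z zI z1 azx {pz ey IH hz} => i j /= zI i1.
have ei : i = grow2 by apply: ord_inj.
rewrite !arrowE /= => hh.
have -> : x.2 = j.
  apply: ord_inj; move: hh; rewrite i1 x0.
  move: (nat_of_ord x.2) (nat_of_ord j) (nat_of_ord x.1) => a b c; lia.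
by rewrite -ei.
Qed.

Lemma row_range (I : {set vtx n}) (i : 'I_2) (j0 : 'I_n) : is_interval I -> (i, j0) \in I ->
  exists b d : 'I_n, b <= d /\ forall j : 'I_n, ((i, j) \in I) = (b <= j <= d).
Proof.
move=> hI h0.
case: (@arg_minnP _ j0 (fun j => (i, j) \in I) (fun j => nat_of_ord j) h0) => b bI bmin.
case: (@arg_maxnP _ j0 (fun j => (i, j) \in I) (fun j => nat_of_ord j) h0) => d dI dmax.
exists b, d; split; first exact: bmin.
move=> j; apply/idP/idP.
  by move=> hj; rewrite bmin //=; apply: dmax.
by move=> hj; apply: (row_convex hI bI dI hj).
Qed.

Lemma interval_form (I : {set vtx n}) : is_interval I ->
  (exists (i : 'I_2) (b d : 'I_n), b <= d /\ I = rowI i b d) \/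
  (exists b1 d1 b2 d2 : 'I_n, [/\ b2 <= b1, b1 <= d2, d2 <= d1 & I = stair b1 d1 b2 d2]).
Proof.
move=> hI; have [ne [cn cv]] := hI.
case: (pickP [pred j | (grow1, j) \in I]) => [j1 h1|n1];
case: (pickP [pred j | (grow2, j) \in I]) => [j2 h2|n2] /=.
- right; have [b1 [d1 [bd1 e1]]] := row_range hI h1.
  have [b2 [d2 [bd2 e2]]] := row_range hI h2.
  have [j /andP [hj1 hj2]] := cross_col h1 h2 (cn _ _ h1 h2) erefl erefl.
  move: (hj1) (hj2); rewrite e1 e2 => hj1' hj2'.
  have b1d2 : b1 <= d2 by lia.
  have hb1 : (grow1, b1) \in I by rewrite e1 leqnn bd1.
  have hd2 : (grow2, d2) \in I by rewrite e2 leqnn bd2 .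
  have x1 : (grow2, b1) \in I.
    apply: (cv _ _ _ hb1 hd2); [exact: reach_down | exact: reach_row].
  have x2 : (grow1, d2) \in I.
    apply: (cv _ _ _ hb1 hd2); [exact: reach_row | exact: reach_down].
  move: x1 x2; rewrite e1 e2 => x1 x2.
  exists b1, d1, b2, d2; split; try lia.
  apply/setP => [[i j0]]; rewrite stairE; case: (ord2 i) => -> /=.
    by rewrite e1 orbF.
  by rewrite e2.
- left; have [b1 [d1 [bd1 e1]]] := row_range hI h1.
  exists grow1, b1, d1; split => //.
  apply/setP => [[i j]]; rewrite rowIE; case: (ord2 i) => -> /=.
    by rewrite e1.
  by have := n2 j; rewrite /= => ->.
- left; have [b2 [d2 [bd2 e2]]] := row_range hI h2.
  exists grow2, b2, d2; split => //.
  apply/setP => [[i j]]; rewrite rowIE; case: (ord2 i) => -> /=.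
    by have := n1 j; rewrite /= => ->.
  by rewrite e2.
- exfalso; move/set0Pn: ne => [[i j]]; case: (ord2 i) => ->.
    by have := n1 j; rewrite /= => ->.
  by have := n2 j; rewrite /= => ->.
Qed.

Lemma stair_inj (b1 d1 b2 d2 b1' d1' b2' d2' : 'I_n) :
  b1 <= d1 -> b2 <= d2 -> b1' <= d1' -> b2' <= d2' ->
  stair b1 d1 b2 d2 = stair b1' d1' b2' d2' ->
  [/\ b1 = b1' :> nat, d1 = d1' :> nat, b2 = b2' :> nat & d2 = d2' :> nat].
Proof.
move=> h1 h2 h3 h4 e.
have m x : (x \in stair b1 d1 b2 d2) = (x \in stair b1' d1' b2' d2') by rewrite e.
have := m (grow1, b1); have := m (grow1, d1); have := m (grow2, b2); have := m (grow2, d2).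
have := m (grow1, b1'); have := m (grow1, d1'); have := m (grow2, b2'); have := m (grow2, d2').
rewrite !stairE /= => *; split; lia.
Qed.

Lemma row_stair (i : 'I_2) (b d b1 d1 b2 d2 : 'I_n) :
  b1 <= d1 -> b2 <= d2 -> rowI i b d <> stair b1 d1 b2 d2.
Proof.
move=> h1 h2 e.
have m x : (x \in rowI i b d) = (x \in stair b1 d1 b2 d2) by rewrite e.
have := m (grow1, b1); have := m (grow2, b2).
rewrite !stairE !rowIE /=; lia.
Qed.

End Comb.

Local Open Scope ring_scope.

Section Split.
Variables (K : fieldType) (n : nat) (S : {set vtx n}) (d : vtx n -> nat)
  (f : forall x y : vtx n, 'M[K]_(d y, d x)).

Definition nsplit (k : nat) (i : forall x, 'M[K]_(d x, k)) (p : forall x, 'M[K]_(k, d x)) :=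
 (forall x, x \in S -> p x *m i x = 1%:M) /\
 (forall x y, x \in S -> y \in S -> reach x y -> f x y *m i x = i y /\ p y *m f x y = p x).

Lemma split_summand k (i : forall x, 'M[K]_(d x, k)) (p : forall x, 'M[K]_(k, d x)) : is_ssfunctor S f -> nsplit i p -> pow_summand S f k.
Proof.
move=> [f1 fM] [pi nat].
pose E x : 'M[K]_(d x) := 1%:M - i x *m p x.
pose R x := row_base (E x).
pose C x := E x *m pinvmx (R x).
have ER x : E x = C x *m R x by rewrite mulmxKpV // eq_row_base.
have RE x : R x = (R x *m pinvmx (E x)) *m E x by rewrite mulmxKpV // eq_row_base.
have Rfree x : row_free (R x) by apply: row_base_free.
have EE x : x \in S -> E x *m E x = E x.
  move=> xS; rewrite /E mulmxBl mul1mx mulmxBr mulmx1 -!mulmxA (mulmxA (p x)) pi //.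
  by rewrite mul1mx subrr subr0.
have Ei x : x \in S -> E x *m i x = 0.
  by move=> xS; rewrite /E mulmxBl mul1mx -mulmxA pi // mulmx1 subrr.
have pE x : x \in S -> p x *m E x = 0.
  by move=> xS; rewrite /E mulmxBr mulmx1 mulmxA pi // mul1mx subrr.
have Ri x : x \in S -> R x *m i x = 0.
  by move=> xS; rewrite RE -mulmxA Ei // mulmx0.
have pC x : x \in S -> p x *m C x = 0.
  move=> xS; apply: (row_free_inj (Rfree x)); rewrite /= -mulmxA -ER pE //.
  by rewrite mul0mx.
have RC x : x \in S -> R x *m C x = 1%:M.
  move=> xS; apply: (row_free_inj (Rfree x)); rewrite /= mul1mx.
  have DC : (R x *m pinvmx (E x)) *m C x = 1%:M.
    apply: (row_free_inj (Rfree x)); rewrite /= mul1mx -mulmxA -ER; exact/esym/RE.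
  rewrite -mulmxA -ER.
  rewrite {1}RE -mulmxA EE //.
have iC x : x \in S -> i x *m p x + C x *m R x = 1%:M.
  by move=> xS; rewrite -ER /E addrC subrK.
have CR x : C x *m R x = 1%:M - i x *m p x by rewrite -ER.
clearbody C R.
pose dY x := \rank (E x).
pose fY x y : 'M[K]_(dY y, dY x) := R y *m f x y *m C x.
exists dY, fY; split.
  split.
    by move=> x xS; rewrite /fY f1 // mulmx1 RC.
  move=> x y z xS yS zS rxy ryz.
  rewrite /fY -!mulmxA (mulmxA (C y)) CR mulmxBl mul1mx !mulmxBr.
  have [h1 _] := nat y z yS zS ryz.
  rewrite !mulmxA -(mulmxA _ _ (i y)) h1 Ri // !mul0mx subr0.
  by rewrite -!mulmxA (mulmxA (f y z)) fM.
exists (fun x => col_mx (p x) (R x)), (fun x => row_mx (i x) (C x)); split.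
  move=> x xS; split.
    rewrite mul_col_row pi // Ri // pC // RC //.
    by rewrite -scalar_mx_block.
  by rewrite mul_row_col iC.
move=> x y xS yS rxy.
have [h1 h2] := nat x y xS yS rxy.
rewrite mul_col_mx mul_block_col !mul1mx !mul0mx addr0 add0r h2; congr col_mx.
apply/esym; rewrite /fY -!mulmxA CR mulmxBr mulmx1 mulmxBr (mulmxA (f x y)) h1.
by rewrite mulmxA Ri // mul0mx subr0.
Qed.

Lemma summand_split k : pow_summand S f k ->
  exists (i : forall x, 'M[K]_(d x, k)) (p : forall x, 'M[K]_(k, d x)), nsplit i p.
Proof.
move=> [dY [fY [_ [phi [psi [inv nat]]]]]].
exists (fun x => psi x *m col_mx 1%:M 0), (fun x => row_mx 1%:M 0 *m phi x); split.
  move=> x xS; have [h1 _] := inv x xS.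
  rewrite mulmxA -(mulmxA _ (phi x)) h1 mulmx1 mul_row_col mul1mx mul0mx addr0 //.
move=> x y xS yS rxy; split.
  have [hx _] := inv x xS; have [_ hy] := inv y yS.
  have e : f x y = psi y *m block_mx 1%:M 0 0 (fY x y) *m phi x.
    by rewrite -mulmxA -nat // mulmxA hy mul1mx.
  by rewrite e -!mulmxA (mulmxA (phi x)) hx mul1mx mul_block_col !mul1mx !mul0mx addr0 add0r mulmx0.
by rewrite -mulmxA nat // mulmxA mul_row_block !mul1mx !mul0mx !addr0.
Qed.

End Split.

Section LinAlg.
Variable K : fieldType.

Lemma rank_factor a b (G : 'M[K]_(a, b)) :
  exists (P : 'M[K]_(\rank G, a)) (Q : 'M[K]_(b, \rank G)), P *m G *m Q = 1%:M.
Proof.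
exists (pid_mx (\rank G) *m invmx (col_ebase G)), (invmx (row_ebase G) *m pid_mx (\rank G)).
set L := col_ebase G; set U := row_ebase G.
transitivity (pid_mx (\rank G) *m invmx L *m (L *m pid_mx (\rank G) *m U) *m (invmx U *m pid_mx (\rank G)) : 'M[K]_(\rank G)).
  by rewrite mulmx_ebase.
rewrite !mulmxA -(mulmxA _ (invmx L)) mulVmx ?col_ebase_unit // mulmx1.
rewrite -(mulmxA _ U) mulmxV ?row_ebase_unit // mulmx1.
rewrite !mul_pid_mx.
have ha := rank_leq_row G; have hb := rank_leq_col G.
rewrite minnn (minn_idPr ha) minnn (minn_idPr hb).
exact: pid_mx_1.
Qed.

Lemma rank1k k : \rank (1%:M : 'M[K]_k) = k.
Proof. exact: mxrank1. Qed.

Lemma le_rank_prod k a b (P : 'M[K]_(k, a)) (G : 'M[K]_(a, b)) (Q : 'M[K]_(b, k)) :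
  P *m G *m Q = 1%:M -> (k <= \rank G)%N.
Proof.
move=> h; rewrite -[k]rank1k -h.
exact: leq_trans (mxrankM_maxl _ _) (mxrankM_maxr _ _).
Qed.

Section CaseB.
Variables (t s2 s1 : nat) (A : 'M[K]_(t, s2)) (B : 'M[K]_(t, s1)).
Let X := (A^T :&: B^T)%MS.

Lemma caseB_bound k (i2 : 'M[K]_(s2, k)) (i1 : 'M[K]_(s1, k)) (pt : 'M[K]_(k, t)) :
  A *m i2 = B *m i1 -> pt *m (B *m i1) = 1%:M -> (k <= \rank X)%N.
Proof.
move=> e h; have hk : (k <= \rank (B *m i1))%N.
  by rewrite -{1}[k]rank1k -h mxrankM_maxr.
apply: leq_trans hk _; rewrite -mxrank_tr; apply: mxrankS.
by rewrite sub_capmx -{1}e !trmx_mul !submxMl.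
Qed.

Lemma caseB_exist : exists (i2 : 'M[K]_(s2, \rank X)) (i1 : 'M[K]_(s1, \rank X))
   (pt : 'M[K]_(\rank X, t)), A *m i2 = B *m i1 /\ pt *m (B *m i1) = 1%:M.
Proof.
have [P [Q h]] := rank_factor X.
have hA : (P *m X <= A^T)%MS by apply: submx_trans (submxMl _ _) (capmxSl _ _).
have hB : (P *m X <= B^T)%MS by apply: submx_trans (submxMl _ _) (capmxSr _ _).
exists (P *m X *m pinvmx A^T)^T, (P *m X *m pinvmx B^T)^T, Q^T.
have eA : A *m (P *m X *m pinvmx A^T)^T = (P *m X)^T.
  by rewrite -(trmxK A) -trmx_mul trmxK mulmxKpV.
have eB : B *m (P *m X *m pinvmx B^T)^T = (P *m X)^T.
  by rewrite -(trmxK B) -trmx_mul trmxK mulmxKpV.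
rewrite eA eB; split => //.
by rewrite -trmx_mul h trmx1.
Qed.

Lemma caseB_formula :
  ((\rank A)%:Z + (\rank B)%:Z - (\rank (row_mx A B))%:Z = (\rank X)%:Z)%R.
Proof.
have e : \rank (row_mx A B) = \rank (A^T + B^T)%MS.
  rewrite -mxrank_tr tr_row_mx; apply: eqmx_rank; apply/eqmxP; apply: eqmx_sym; exact: addsmxE.
have := mxrank_sum_cap A^T B^T; rewrite !mxrank_tr -e -/X => h.
by apply/eqP; rewrite subr_eq -!PoszD -h addnC.
Qed.
End CaseB.

Section CaseC.
Variables (s t2 t1 : nat) (B : 'M[K]_(t2, s)) (C : 'M[K]_(t1, s)).
Let X := (B :&: C)%MS.

Lemma caseC_bound k (ic : 'M[K]_(s, k)) (p2 : 'M[K]_(k, t2)) (p1 : 'M[K]_(k, t1)) :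
  p2 *m B = p1 *m C -> p2 *m B *m ic = 1%:M -> (k <= \rank X)%N.
Proof.
move=> e h; have hk : (k <= \rank (p2 *m B))%N.
  by rewrite -{1}[k]rank1k -h mxrankM_maxl.
apply: leq_trans hk _; apply: mxrankS.
by rewrite sub_capmx {2}e !submxMl.
Qed.

Lemma caseC_exist : exists (ic : 'M[K]_(s, \rank X)) (p2 : 'M[K]_(\rank X, t2))
   (p1 : 'M[K]_(\rank X, t1)), p2 *m B = p1 *m C /\ p2 *m B *m ic = 1%:M.
Proof.
have [P [Q h]] := rank_factor X.
have hB : (P *m X <= B)%MS by apply: submx_trans (submxMl _ _) (capmxSl _ _).
have hC : (P *m X <= C)%MS by apply: submx_trans (submxMl _ _) (capmxSr _ _).
exists Q, (P *m X *m pinvmx B), (P *m X *m pinvmx C).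
by rewrite !mulmxKpV.
Qed.

Lemma caseC_formula :
  ((\rank B)%:Z + (\rank C)%:Z - (\rank (col_mx B C))%:Z = (\rank X)%:Z)%R.
Proof.
have e : \rank (col_mx B C) = \rank (B + C)%MS.
  apply: eqmx_rank; apply/eqmxP; apply: eqmx_sym; exact: addsmxE.
have := mxrank_sum_cap B C; rewrite -e -/X => h.
by apply/eqP; rewrite subr_eq -!PoszD -h addnC.
Qed.
End CaseC.

Section CaseD.
Variables (s2 s1 t2 t1 : nat) (A : 'M[K]_(t2, s2)) (B : 'M[K]_(t2, s1)) (C : 'M[K]_(t1, s1)).
Let X := (A^T :&: B^T)%MS.
Let U1 := row_mx A^T (0 : 'M[K]_(s2, t1)).
Let U2 := row_mx B^T C^T.
Let W := (U1 :&: U2)%MS.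
Let Z := lsubmx W.

Lemma WU1 : exists D : 'M[K]_(t2 + t1, s2), W = D *m U1.
Proof. by apply/submxP; apply: capmxSl. Qed.
Lemma WU2 : exists D : 'M[K]_(t2 + t1, s1), W = D *m U2.
Proof. by apply/submxP; apply: capmxSr. Qed.

Lemma rsubW : rsubmx W = 0.
Proof. by have [D ->] := WU1; rewrite /U1 mul_mx_row row_mxKr mulmx0. Qed.

Lemma WE : W = row_mx Z 0.
Proof. by rewrite -rsubW hsubmxK. Qed.

Lemma rankZ : \rank Z = \rank W.
Proof. by rewrite [in RHS]WE rank_row_mx0. Qed.

Lemma ZX : (Z <= X)%MS.
Proof.
rewrite sub_capmx; apply/andP; split.
  by rewrite /Z; have [D ->] := WU1; rewrite /U1 mul_mx_row row_mxKl submxMl.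
by rewrite /Z; have [D ->] := WU2; rewrite /U2 mul_mx_row row_mxKl submxMl.
Qed.

Lemma subZ (z : 'rV[K]_t2) : (z <= Z)%MS -> exists y : 'rV[K]_s1, z = y *m B^T /\ y *m C^T = 0.
Proof.
move=> /submxP [e ->].
have : (e *m W <= U2)%MS by apply: submx_trans (submxMl _ _) (capmxSr _ _).
move=> /submxP [y hy]; exists y.
move: hy; rewrite {1}WE mul_mx_row mulmx0 /U2 mul_mx_row => /eq_row_mx [h1 h2].
by split.
Qed.

Lemma Zsub (y : 'rV[K]_s1) (w : 'rV[K]_s2) : y *m C^T = 0 -> y *m B^T = w *m A^T ->
  (y *m B^T <= Z)%MS.
Proof.
move=> h1 h2.
have hW : (row_mx (y *m B^T) 0 <= W)%MS.
  rewrite sub_capmx; apply/andP; split.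
    by rewrite h2 -(mulmx0 _ w) -mul_mx_row submxMl.
  by rewrite -h1 -mul_mx_row submxMl.
move/submxP: hW => [v hv].
have := congr1 lsubmx hv; rewrite row_mxKl {1}WE mul_mx_row row_mxKl => ->.
exact: submxMl.
Qed.

Lemma caseD_bound k (i2 : 'M[K]_(s2, k)) (i1 : 'M[K]_(s1, k)) (p2 : 'M[K]_(k, t2))
  (p1 : 'M[K]_(k, t1)) :
  A *m i2 = B *m i1 -> p2 *m B = p1 *m C -> p2 *m (B *m i1) = 1%:M ->
  (k + \rank Z <= \rank X)%N.
Proof.
move=> e1 e2 h.
set V := (B *m i1)^T.
have hk : (k <= \rank V)%N.
  by rewrite mxrank_tr -{1}[k]rank1k -h mxrankM_maxr.
have VX : (V <= X)%MS by rewrite sub_capmx /V -{1}e1 !trmx_mul !submxMl.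
have VZ : (V :&: Z)%MS = 0.
  apply/eqP/rowV0P => v; rewrite sub_capmx => /andP [/submxP [u hu] /subZ [y [hy1 hy2]]].
  have e3 : v *m p2^T = u.
    by rewrite hu /V -mulmxA -trmx_mul h trmx1 mulmx1.
  have e4 : v *m p2^T = 0.
    by rewrite hy1 -mulmxA -trmx_mul e2 trmx_mul mulmxA hy2 mul0mx.
  by rewrite hu -e3 e4 mul0mx.
apply: leq_trans (leq_add hk (leqnn _)) _.
rewrite -mxrank_disjoint_sum //; apply: mxrankS.
by rewrite addsmx_sub VX ZX.
Qed.

Lemma caseD_formula :
  ((\rank (block_mx A B 0 C))%:Z + (\rank B)%:Z - (\rank (col_mx B C))%:Z
     - (\rank (row_mx A B))%:Z = (\rank X)%:Z - (\rank Z)%:Z)%R.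
Proof.
have eP := caseB_formula A B.
have eN : \rank (block_mx A B 0 C) = \rank (U1 + U2)%MS.
  rewrite -mxrank_tr tr_block_mx trmx0 block_mxEv.
  apply: eqmx_rank; apply/eqmxP; apply: eqmx_sym; exact: addsmxE.
have eQ : \rank (col_mx B C) = \rank U2 by rewrite -mxrank_tr tr_col_mx.
have eU1 : \rank U1 = \rank A by rewrite /U1 rank_row_mx0 mxrank_tr.
have := mxrank_sum_cap U1 U2; rewrite -eN -/W -rankZ eU1 -eQ => h.
rewrite -eP.
have -> : (\rank (block_mx A B 0 C))%:Z = (\rank A)%:Z + (\rank (col_mx B C))%:Z - (\rank Z)%:Z.
  by apply/eqP; rewrite eq_sym subr_eq -!PoszD h.
ring.
Qed.

Lemma caseD_exist : exists r : nat, r%:Z = ((\rank X)%:Z - (\rank Z)%:Z)%R /\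
  exists (i2 : 'M[K]_(s2, r)) (i1 : 'M[K]_(s1, r)) (p2 : 'M[K]_(r, t2)) (p1 : 'M[K]_(r, t1)),
  [/\ A *m i2 = B *m i1, p2 *m B = p1 *m C & p2 *m (B *m i1) = 1%:M].
Proof.
set Y := (X :\: Z)%MS.
set Kt := cokermx U2.
set G := row_mx Y (0 : 'M[K]_(t2, t1)) *m Kt.
have YX : (Y <= X)%MS by apply: diffmxSl.
have rG : \rank G = \rank Y.
  rewrite /G -(@rank_row_mx0 _ _ _ t1 Y).
  apply/mxrank_injP/rowV0P => v; rewrite sub_capmx => /andP [/submxP [u hu]].
  rewrite sub_kermx -submxE => vU2.
  have uYA : (u *m Y <= A^T)%MS.
    by apply: submx_trans (submxMl _ _) (submx_trans YX (capmxSl _ _)).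
  have uYB : (u *m Y <= B^T)%MS.
    by apply: submx_trans (submxMl _ _) (submx_trans YX (capmxSr _ _)).
  have hv : v = row_mx (u *m Y) 0 by rewrite hu mul_mx_row mulmx0.
  have vW : (v <= W)%MS.
    rewrite sub_capmx vU2 andbT hv.
    by rewrite -(mulmxKpV uYA) -(mulmx0 _ (u *m Y *m pinvmx A^T)) -mul_mx_row submxMl.
  have uYZ : (u *m Y <= Z)%MS.
    move/submxP: vW => [e he].
    have := congr1 lsubmx he; rewrite {1}hv row_mxKl {1}WE mul_mx_row row_mxKl => ->.
    exact: submxMl.
  have : (u *m Y <= Y :&: Z)%MS by rewrite sub_capmx submxMl uYZ.
  rewrite capmx_diff submx0 => /eqP h0.
  by rewrite hv h0 row_mx0.
have hKt : U2 *m Kt = 0 by apply: mulmx_coker.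
clearbody Kt.
exists (\rank G); split.
  rewrite rG; apply/eqP; rewrite eq_sym subr_eq -PoszD; apply/eqP; congr Posz.
  rewrite -(mxrank_cap_compl X Z) addnC.
  by rewrite (capmx_idPr ZX).
have [P [Q h]] := rank_factor G.
have PYA : (P *m Y <= A^T)%MS.
  by apply: submx_trans (submxMl _ _) (submx_trans YX (capmxSl _ _)).
have PYB : (P *m Y <= B^T)%MS.
  by apply: submx_trans (submxMl _ _) (submx_trans YX (capmxSr _ _)).
set T := Kt *m Q.
exists (P *m Y *m pinvmx A^T)^T, (P *m Y *m pinvmx B^T)^T, (usubmx T)^T, (- (dsubmx T)^T).
have eA : A *m (P *m Y *m pinvmx A^T)^T = (P *m Y)^T.
  by rewrite -(trmxK A) -trmx_mul trmxK mulmxKpV.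
have eB : B *m (P *m Y *m pinvmx B^T)^T = (P *m Y)^T.
  by rewrite -(trmxK B) -trmx_mul trmxK mulmxKpV.
rewrite eA eB; split => //.
  have h0 : U2 *m T = 0 by rewrite /T mulmxA hKt mul0mx.
  move: h0; rewrite -(vsubmxK T) /U2 mul_row_col => /eqP; rewrite addr_eq0 => /eqP h0.
  by rewrite mulNmx -[B](trmxK) -[C](trmxK) -!trmx_mul col_mxKu col_mxKd h0 linearN.
rewrite -trmx_mul; apply/esym; rewrite -[1%:M]trmx1 -h; congr trmx.
by rewrite /G -!mulmxA -/T -{1}(vsubmxK T) mul_row_col mul0mx addr0.
Qed.
End CaseD.

End LinAlg.

Section Vertex.
Variables (K : fieldType) (n : nat) (S : {set vtx n}) (d : vtx n -> nat)
  (f : forall x y : vtx n, 'M[K]_(d y, d x)).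
Hypothesis fF : is_ssfunctor S f.

Definition multP (m : nat) :=
  (exists (i : forall x, 'M[K]_(d x, m)) (p : forall x, 'M[K]_(m, d x)), nsplit S f i p) /\
  (forall k (i : forall x, 'M[K]_(d x, k)) (p : forall x, 'M[K]_(k, d x)), nsplit S f i p -> (k <= m)%N).

Definition pickv k (x0 : vtx n) (A : 'M[K]_(d x0, k)) (B : forall x, 'M[K]_(d x, k)) (x : vtx n) :
  'M[K]_(d x, k) :=
  match x0 =P x with ReflectT e => castmx (congr1 d e, erefl k) A | ReflectF _ => B x end.
Definition pickvT k (x0 : vtx n) (A : 'M[K]_(k, d x0)) (B : forall x, 'M[K]_(k, d x)) (x : vtx n) :
  'M[K]_(k, d x) :=
  match x0 =P x with ReflectT e => castmx (erefl k, congr1 d e) A | ReflectF _ => B x end.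

Lemma pickv_eq k x0 A B : @pickv k x0 A B x0 = A.
Proof. by rewrite /pickv; case: (x0 =P x0) => // e; rewrite castmx_id. Qed.
Lemma pickv_neq k x0 A B x : x0 != x -> @pickv k x0 A B x = B x.
Proof. by rewrite /pickv; case: (x0 =P x) => // e; rewrite e eqxx. Qed.
Lemma pickvT_eq k x0 A B : @pickvT k x0 A B x0 = A.
Proof. by rewrite /pickvT; case: (x0 =P x0) => // e; rewrite castmx_id. Qed.
Lemma pickvT_neq k x0 A B x : x0 != x -> @pickvT k x0 A B x = B x.
Proof. by rewrite /pickvT; case: (x0 =P x) => // e; rewrite e eqxx. Qed.

Lemma f1 x : x \in S -> f x x = 1%:M.
Proof. by case: fF => h _; apply: h. Qed.
Lemma fM x y z : x \in S -> y \in S -> z \in S -> reach x y -> reach y z ->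
  f y z *m f x y = f x z.
Proof. by case: fF => _ h; apply: h. Qed.
Lemma reach0 (x : vtx n) : reach x x.
Proof. exact: connect0. Qed.

Lemma rect_mult (s t : vtx n) : s \in S -> t \in S ->
  (forall x, x \in S -> x = s \/ x = t) -> reach s t -> multP (\rank (f s t)).
Proof.
move=> sS tS hS rst; split.
  have [P [Q h]] := rank_factor (f s t).
  have rs x : x \in S -> reach s x by move=> /hS [->|->] //; exact: reach0.
  have rt x : x \in S -> reach x t by move=> /hS [->|->] //; exact: reach0.
  exists (fun x => f s x *m Q), (fun x => P *m f x t); split.
    move=> x xS; rewrite mulmxA -(mulmxA P) fM //; [exact: rs | exact: rt].
  move=> x y xS yS rxy; split.
    by rewrite mulmxA fM //; exact: rs.
  by rewrite -mulmxA fM //; exact: rt.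
move=> k i p [hpi hn].
have [_ e] := hn s t sS tS rst.
apply: (@le_rank_prod _ _ _ _ (p t) (f s t) (i s)).
by rewrite e hpi.
Qed.

Lemma B_mult (s1 s2 t : vtx n) : s1 \in S -> s2 \in S -> t \in S ->
  (forall x, x \in S -> [\/ x = s1, x = s2 | x = t]) ->
  s1 != s2 -> s2 != t -> s1 != t ->
  (forall x y, x \in S -> y \in S -> reach x y ->
     [\/ x = y, x = s1 /\ y = t | x = s2 /\ y = t]) ->
  reach s1 t -> reach s2 t ->
  exists m, m%:Z = ((\rank (f s2 t))%:Z + (\rank (f s1 t))%:Z
                     - (\rank (row_mx (f s2 t) (f s1 t)))%:Z)%R /\ multP m.
Proof.
move=> s1S s2S tS hS n12 n2t n1t hr r1 r2.
have f1t := f1 tS; have f11 := f1 s1S.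
set A := f s2 t; set B := f s1 t.
exists (\rank (A^T :&: B^T)%MS); split; first by rewrite caseB_formula.
split.
  have [i2 [i1 [pt [e h]]]] := caseB_exist A B.
  set io := pickv i2 (fun x => f s1 x *m i1).
  exists io, (fun x => pt *m f x t).
  have ev1 : io s1 = i1 by rewrite /io pickv_neq 1?eq_sym //= f11 mul1mx.
  have ev2 : io s2 = i2 by rewrite /io pickv_eq.
  have evt : io t = B *m i1 by rewrite /io pickv_neq.
  split.
    move=> x xS; case: (hS x xS) => ->.
    - by rewrite /= ev1 -/B -mulmxA.
    - by rewrite /= ev2 -/A -mulmxA e.
    - by rewrite /= evt f1t mulmx1.
  move=> x y xS yS rxy; case: (hr x y xS yS rxy) => [<-|[-> ->]|[-> ->]].
  - by rewrite (f1 xS) mul1mx mulmx1.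
  - by rewrite ev1 evt f1t mulmx1.
  - by rewrite ev2 evt -/A e f1t mulmx1.
move=> k i p [hpi hn].
have [e1 _] := hn s1 t s1S tS r1.
have [e2 _] := hn s2 t s2S tS r2.
apply: (@caseB_bound _ _ _ _ A B _ (i s2) (i s1) (p t)).
  by rewrite /A /B e1 e2.
by rewrite /B e1 hpi.
Qed.

Lemma C_mult (s t1 t2 : vtx n) : s \in S -> t1 \in S -> t2 \in S ->
  (forall x, x \in S -> [\/ x = s, x = t1 | x = t2]) ->
  t1 != t2 -> t1 != s ->
  (forall x y, x \in S -> y \in S -> reach x y ->
     [\/ x = y, x = s /\ y = t1 | x = s /\ y = t2]) ->
  reach s t1 -> reach s t2 ->
  exists m, m%:Z = ((\rank (f s t2))%:Z + (\rank (f s t1))%:Z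
                     - (\rank (col_mx (f s t2) (f s t1)))%:Z)%R /\ multP m.
Proof.
move=> sS t1S t2S hS n12 n1s hr r1 r2.
have f22 := f1 t2S; have fss := f1 sS.
set B := f s t2; set C := f s t1.
exists (\rank (B :&: C)%MS); split; first by rewrite caseC_formula.
split.
  have [ic [p2 [p1 [e h]]]] := caseC_exist B C.
  set po := pickvT p1 (fun x => p2 *m f x t2).
  exists (fun x => f s x *m ic), po.
  have evs : po s = p2 *m B by rewrite /po pickvT_neq.
  have ev1 : po t1 = p1 by rewrite /po pickvT_eq.
  have ev2 : po t2 = p2 by rewrite /po pickvT_neq //= f22 mulmx1.
  split.
    move=> x xS; case: (hS x xS) => ->.
    - by rewrite evs fss mul1mx.
    - by rewrite ev1 -/C mulmxA -e.
    - by rewrite ev2 -/B mulmxA.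
  move=> x y xS yS rxy; case: (hr x y xS yS rxy) => [<-|[-> ->]|[-> ->]].
  - by rewrite (f1 xS) mul1mx mulmx1.
  - by rewrite fss mul1mx evs ev1 -/C e.
  - by rewrite fss mul1mx evs ev2.
move=> k i p [hpi hn].
have [_ e1] := hn s t1 sS t1S r1.
have [_ e2] := hn s t2 sS t2S r2.
apply: (@caseC_bound _ _ _ _ B C _ (i s) (p t2) (p t1)).
  by rewrite /B /C e1 e2.
by rewrite /B e2 hpi.
Qed.

Lemma D_mult (s1 s2 t1 t2 : vtx n) : s1 \in S -> s2 \in S -> t1 \in S -> t2 \in S ->
  (forall x, x \in S -> [\/ x = s1, x = s2, x = t1 | x = t2]) ->
  s2 != s1 -> s2 != t1 -> s2 != t2 -> t1 != s1 -> t1 != s2 -> t1 != t2 ->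
  (forall x y, x \in S -> y \in S -> reach x y ->
     [\/ x = y, x = s2 /\ y = t2, x = s1 /\ y = t2 | x = s1 /\ y = t1]) ->
  reach s2 t2 -> reach s1 t2 -> reach s1 t1 ->
  exists m, m%:Z =
       ((\rank (block_mx (f s2 t2) (f s1 t2) 0 (f s1 t1)))%:Z
        + (\rank (f s1 t2))%:Z
        - (\rank (col_mx (f s1 t2) (f s1 t1)))%:Z
        - (\rank (row_mx (f s2 t2) (f s1 t2)))%:Z)%R /\ multP m.
Proof.
move=> s1S s2S t1S t2S hS a1 a2 a3 a4 a5 a6 hr r22 r12 r11.
have f22 := f1 t2S; have f11 := f1 s1S.
set A := f s2 t2; set B := f s1 t2; set C := f s1 t1.
have [r [er [i2 [i1 [p2 [p1 [e1 e2 h]]]]]]] := caseD_exist A B C.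
exists r; split; first by rewrite er caseD_formula.
split.
  set io := pickv i2 (fun x => f s1 x *m i1).
  set po := pickvT p1 (fun x => p2 *m f x t2).
  exists io, po.
  have ei1 : io s1 = i1 by rewrite /io pickv_neq //= f11 mul1mx.
  have ei2 : io s2 = i2 by rewrite /io pickv_eq.
  have eit2 : io t2 = B *m i1 by rewrite /io pickv_neq.
  have eit1 : io t1 = C *m i1 by rewrite /io pickv_neq.
  have ep1 : po t1 = p1 by rewrite /po pickvT_eq.
  have ep2 : po t2 = p2 by rewrite /po pickvT_neq //= f22 mulmx1.
  have eps1 : po s1 = p2 *m B by rewrite /po pickvT_neq.
  have eps2 : po s2 = p2 *m A by rewrite /po pickvT_neq.
  split.
    move=> x xS; case: (hS x xS) => ->.
    - by rewrite eps1 ei1 -mulmxA.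
    - by rewrite eps2 ei2 -mulmxA e1.
    - by rewrite ep1 eit1 mulmxA -e2 -mulmxA.
    - by rewrite ep2 eit2.
  move=> x y xS yS rxy; case: (hr x y xS yS rxy) => [<-|[-> ->]|[-> ->]|[-> ->]].
  - by rewrite (f1 xS) mul1mx mulmx1.
  - by rewrite ei2 eit2 -/A e1 ep2 eps2.
  - by rewrite ei1 eit2 ep2 eps1.
  - by rewrite ei1 eit1 ep1 eps1 -/C e2.
move=> k i p [hpi hn].
have [ea fa] := hn s2 t2 s2S t2S r22.
have [eb fb] := hn s1 t2 s1S t2S r12.
have [ec fc] := hn s1 t1 s1S t1S r11.
have hk := @caseD_bound _ _ _ _ _ A B C k (i s2) (i s1) (p t2) (p t1).
have {}hk : (k + \rank (lsubmx (row_mx A^T (0 : 'M_(_, _)) :&: row_mx B^T C^T)%MS) <=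
              \rank (A^T :&: B^T)%MS)%N.
  apply: hk; first by rewrite /A /B ea eb.
    by rewrite /B /C fb fc.
  by rewrite /B eb hpi.
have : (k%:Z <= r%:Z)%R.
  move: hk; rewrite er; lia.
by rewrite lez_nat.
Qed.

End Vertex.

Section Main.
Variables (K : fieldType) (n : nat) (M : grep K n).

Lemma hcomp0 (i : 'I_2) (j k : nat) (e : k = 0%N) :
  conform_mx (0 : 'M[K]_(gdim M i j, gdim M i j)) (hcomp M i j k) = 1%:M.
Proof. by subst k; rewrite /= conform_mx_id. Qed.

Lemma Mpath_id (x : vtx n) : Mpath M x x = 1%:M.
Proof. by rewrite /Mpath eqxx hcomp0 // subnn. Qed.

Lemma Mpath_functor (I : {set vtx n}) : is_interval I -> is_ssfunctor (Iss I) (Mpath M).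
Proof.
move=> hI; split; first by move=> x _; apply: Mpath_id.
move=> x y z xS yS zS rxy ryz.
case: (Iss_chain hI xS yS zS rxy ryz) => <-; rewrite Mpath_id ?mulmx1 ?mul1mx //.
Qed.

Lemma dbar_of (I : {set vtx n}) m : is_interval I ->
  multP (Iss I) (Mpath M) m -> dbar_ss_is M I m.
Proof.
move=> hI [[i [p hs]] hb]; have fF := Mpath_functor hI; split.
  exact: split_summand fF hs.
by move/summand_split => [i' [p' hs']]; have := hb _ _ _ hs'; rewrite ltnn.
Qed.

End Main.

Ltac solve_r := first [ by apply: Or31 | by apply: Or32 | by apply: Or33
  | by apply: Or41 | by apply: Or42 | by apply: Or43 | by apply: Or44
  | (exfalso; lia) | (move=> _; exfalso; lia)
  | (move/reach_le; rewrite /= => ?; exfalso; lia) ].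

Ltac solve_h := let hr0 := fresh "hr0" in move=> hr0; first [ by apply: Or31 | by apply: Or32 | by apply: Or33
  | by apply: Or41 | by apply: Or42 | by apply: Or43 | by apply: Or44
  | (exfalso; lia)
  | (move/reach_le: hr0; rewrite /= => ?; exfalso; lia) ].

Ltac neq := rewrite pairE /=; lia.

Lemma ord_eq n0 (a b : 'I_n0) : (a == b) = (nat_of_ord a == nat_of_ord b).
Proof. by []. Qed.

Section Excl.
Variable n : nat.
Implicit Type I : {set vtx n}.

Definition stairP I (P : nat -> nat -> nat -> nat -> bool) :=
  exists b1 d1 b2 d2 : 'I_n, [/\ P b1 d1 b2 d2, b1 <= d1, b2 <= d2 & I = stair b1 d1 b2 d2]%N.

Lemma rect_cases I : is_rect I ->
  (exists (i : 'I_2) (b d : 'I_n), I = rowI i b d) \/ stairP I (fun b1 d1 b2 d2 => (b1 == b2) && (d1 == d2)).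
Proof.
case=> [[i [b [d [_ ->]]]]|[b [d [hbd ->]]]]; first by left; exists i, b, d.
by right; exists b, d, b, d; rewrite !eqxx.
Qed.

Lemma B_cases I : caseB I -> stairP I (fun b1 d1 b2 d2 => [&& b2 < b1, b1 <= d2 & d2 == d1]%N).
Proof.
case=> [b1 [d1 [b2 [d2 [/and3P [c1 c2 /eqP c3] ->]]]]]; subst d2.
exists b1, d1, b2, d1; split; rewrite ?c1 ?c2 ?c3 ?eqxx //; lia.
Qed.
Lemma C_cases I : caseC I -> stairP I (fun b1 d1 b2 d2 => [&& b2 == b1, b1 <= d2 & d2 < d1]%N).
Proof.
case=> [b1 [d1 [b2 [d2 [/and3P [/eqP c1 c2 c3] ->]]]]]; subst b2.
exists b1, d1, b1, d2; split; rewrite ?c1 ?c2 ?c3 ?eqxx //; lia.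
Qed.
Lemma D_cases I : caseD I -> stairP I (fun b1 d1 b2 d2 => [&& b2 < b1, b1 <= d2 & d2 < d1]%N).
Proof.
case=> [b1 [d1 [b2 [d2 [/and3P [c1 c2 c3] ->]]]]].
exists b1, d1, b2, d2; split; rewrite ?c1 ?c2 ?c3 ?eqxx //; lia.
Qed.

Lemma stairP_excl I P Q : stairP I P -> stairP I Q ->
  (forall b1 d1 b2 d2, P b1 d1 b2 d2 -> Q b1 d1 b2 d2 -> False) -> False.
Proof.
move=> [b1 [d1 [b2 [d2 [hP h1 h2 e]]]]] [b1' [d1' [b2' [d2' [hQ h1' h2' e']]]]] H.
rewrite e in e'; have [x1 x2 x3 x4] := stair_inj h1 h2 h1' h2' e'.
by apply: (H b1 d1 b2 d2) => //; rewrite x1 x2 x3 x4.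
Qed.

Lemma row_stairP I P : (exists (i : 'I_2) (b d : 'I_n), I = rowI i b d) -> stairP I P -> False.
Proof.
move=> [i [b [d ->]]] [b1 [d1 [b2 [d2 [_ h1 h2 e]]]]].
exact: row_stair h1 h2 e.
Qed.

End Excl.


Unset Implicit Arguments.

Theorem mainTheorem20 (K : fieldType) (n : nat) (M : grep K n) (I : {set vtx n}) :
  is_interval I ->
  exactly_one4 (is_rect I) (caseB I) (caseC I) (caseD I) /\
  (forall (i : 'I_2) (b d : 'I_n), (b <= d)%N -> I = rowI i b d ->
     dbar_ss_eq M I (\rank (Mpath M (i, b) (i, d)))%:Z) /\
  (forall b d : 'I_n, (b <= d)%N -> I = stair b d b d ->
     dbar_ss_eq M I (\rank (Mpath M (grow1, b) (grow2, d)))%:Z) /\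
  (forall b1 d1 b2 d2 : 'I_n, [&& (b2 < b1)%N, (b1 <= d2)%N & d2 == d1] ->
     I = stair b1 d1 b2 d2 ->
     let s1 := (grow1, b1) in let s2 := (grow2, b2) in let t2 := (grow2, d2) in
     dbar_ss_eq M I ((\rank (Mpath M s2 t2))%:Z + (\rank (Mpath M s1 t2))%:Z
                     - (\rank (row_mx (Mpath M s2 t2) (Mpath M s1 t2)))%:Z)) /\
  (forall b1 d1 b2 d2 : 'I_n, [&& b2 == b1, (b1 <= d2)%N & (d2 < d1)%N] ->
     I = stair b1 d1 b2 d2 ->
     let s1 := (grow1, b1) in let t1 := (grow1, d1) in let t2 := (grow2, d2) in
     dbar_ss_eq M I ((\rank (Mpath M s1 t2))%:Z + (\rank (Mpath M s1 t1))%:Z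
                     - (\rank (col_mx (Mpath M s1 t2) (Mpath M s1 t1)))%:Z)) /\
  (forall b1 d1 b2 d2 : 'I_n, [&& (b2 < b1)%N, (b1 <= d2)%N & (d2 < d1)%N] ->
     I = stair b1 d1 b2 d2 ->
     let s1 := (grow1, b1) in let s2 := (grow2, b2) in
     let t1 := (grow1, d1) in let t2 := (grow2, d2) in
     dbar_ss_eq M I
       ((\rank (block_mx (Mpath M s2 t2) (Mpath M s1 t2) 0 (Mpath M s1 t1)))%:Z
        + (\rank (Mpath M s1 t2))%:Z
        - (\rank (col_mx (Mpath M s1 t2) (Mpath M s1 t1)))%:Z
        - (\rank (row_mx (Mpath M s2 t2) (Mpath M s1 t2)))%:Z)).
Proof.
move=> hI; split; last split; last split; last split; last split.
- split.
    case: (interval_form hI) => [[i [b [d [hbd eI]]]] | [b1 [d1 [b2 [d2 [h1 h2 h3 eI]]]]]].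
      by left; left; exists i, b, d.
    have [e1|e1] : b2 = b1 \/ (b2 < b1)%N by rewrite ltn_neqAle h1 andbT; case: eqP => [/ord_inj|]; auto.
      subst b2; have [e2|e2] : d2 = d1 \/ (d2 < d1)%N by rewrite ltn_neqAle h3 andbT; case: eqP => [/ord_inj|]; auto.
        by subst d2; left; right; exists b1, d1; split => //; apply: leq_trans h2 h3.
      by right; right; left; exists b1, d1, b1, d2; rewrite eqxx h2 e2.
    have [e2|e2] : d2 = d1 \/ (d2 < d1)%N by rewrite ltn_neqAle h3 andbT; case: eqP => [/ord_inj|]; auto.
      by subst d2; right; left; exists b1, d1, b2, d1; rewrite e1 h2 eqxx.
    by right; right; right; exists b1, d1, b2, d2; rewrite e1 h2 e2.
  have ex P Q : stairP I P -> stairP I Q -> (forall b1 d1 b2 d2, P b1 d1 b2 d2 -> Q b1 d1 b2 d2 -> False) -> False.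
    exact: stairP_excl.
  split; [|split; [|split; [|split; [|split]]]].
  + move=> [/rect_cases [hr|hr] /B_cases hb]; first exact: row_stairP hr hb.
    by apply: (ex _ _ hr hb) => ? ? ? ?; lia.
  + move=> [/rect_cases [hr|hr] /C_cases hb]; first exact: row_stairP hr hb.
    by apply: (ex _ _ hr hb) => ? ? ? ?; lia.
  + move=> [/rect_cases [hr|hr] /D_cases hb]; first exact: row_stairP hr hb.
    by apply: (ex _ _ hr hb) => ? ? ? ?; lia.
  + move=> [/B_cases hr /C_cases hb]; by apply: (ex _ _ hr hb) => ? ? ? ?; lia.
  + move=> [/B_cases hr /D_cases hb]; by apply: (ex _ _ hr hb) => ? ? ? ?; lia.
  + move=> [/C_cases hr /D_cases hb]; by apply: (ex _ _ hr hb) => ? ? ? ?; lia.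
- move=> i b d hbd eI; subst I.
  exists (\rank (Mpath M (i, b) (i, d))); split => //.
  apply: dbar_of => //.
  apply: rect_mult.
  + exact: Mpath_functor.
  + by rewrite Iss_row // eqxx.
  + by rewrite Iss_row // eqxx orbT.
  + by move=> x; rewrite Iss_row // => /orP [/eqP->|/eqP->]; [left|right].
  + exact: reach_row.
- move=> b d hbd eI; subst I.
  exists (\rank (Mpath M (grow1, b) (grow2, d))); split => //.
  apply: dbar_of => //.
  apply: rect_mult.
  + exact: Mpath_functor.
  + by rewrite Iss_stair // eqxx.
  + by rewrite Iss_stair // eqxx !orbT.
  + move=> x; rewrite Iss_stair //; case/or4P => [/eqP->|/andP[_]|/andP[_]|/eqP->];
      rewrite ?ltnn //; by [left|right].
  + exact: connect_trans (reach_row _ hbd) (reach_down _).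
- move=> b1 d1 b2 d2 /and3P [c1 c2 /eqP c3] eI s1 s2 t2; subst I s1 s2 t2.
  have c3' : nat_of_ord d2 = d1 by rewrite c3.
  have h1 : (b2 <= b1)%N by exact: ltnW.
  have h3 : (d2 <= d1)%N by rewrite c3.
  have hI' := hI.
  have fF := Mpath_functor M hI.
  have p1 : (grow1, b1) \in Iss (stair b1 d1 b2 d2) by rewrite Iss_stair // eqxx.
  have p2 : (grow2, b2) \in Iss (stair b1 d1 b2 d2) by rewrite Iss_stair // eqxx c1 orbT.
  have p3 : (grow2, d2) \in Iss (stair b1 d1 b2 d2) by rewrite Iss_stair // eqxx !orbT.
  have hS : forall x, x \in Iss (stair b1 d1 b2 d2) ->
      [\/ x = (grow1, b1), x = (grow2, b2) | x = (grow2, d2)].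
    move=> x; rewrite Iss_stair //; case/or4P => [/eqP->|/andP[_ h]|/andP[/eqP-> _]|/eqP->];
      solve_r.
  have hr : forall x y, x \in Iss (stair b1 d1 b2 d2) -> y \in Iss (stair b1 d1 b2 d2) ->
     reach x y -> [\/ x = y, x = (grow1, b1) /\ y = (grow2, d2) | x = (grow2, b2) /\ y = (grow2, d2)].
    move=> x y; rewrite !Iss_stair //;
      case/or4P => [/eqP->|/andP[/eqP-> ?]|/andP[/eqP-> ?]|/eqP->];
      case/or4P => [/eqP->|/andP[/eqP-> ?]|/andP[/eqP-> ?]|/eqP->]; solve_h.
  have q1 : (grow1, b1) != (grow2, b2) :> vtx n by neq.
  have q2 : (grow2, b2) != (grow2, d2) :> vtx n by neq.
  have q3 : (grow1, b1) != (grow2, d2) :> vtx n by neq.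
  have r1 : reach (grow1, b1) (grow2, d2) by exact: connect_trans (reach_row _ c2) (reach_down _).
  have r2 : reach (grow2, b2) (grow2, d2) by exact: reach_row (leq_trans h1 c2).
  have [m [em hm]] := B_mult fF p1 p2 p3 hS q1 q2 q3 hr r1 r2.
  exists m; split; last by rewrite em.
  exact: dbar_of.
- move=> b1 d1 b2 d2 /and3P [/eqP c1 c2 c3] eI s1 t1 t2; subst I s1 t1 t2 b2.
  have h3 : (d2 <= d1)%N by exact: ltnW.
  have fF := Mpath_functor M hI.
  have p1 : (grow1, b1) \in Iss (stair b1 d1 b1 d2) by rewrite Iss_stair // eqxx.
  have p2 : (grow1, d1) \in Iss (stair b1 d1 b1 d2) by rewrite Iss_stair // eqxx c3 orbT.
  have p3 : (grow2, d2) \in Iss (stair b1 d1 b1 d2) by rewrite Iss_stair // eqxx !orbT.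
  have hS : forall x, x \in Iss (stair b1 d1 b1 d2) ->
      [\/ x = (grow1, b1), x = (grow1, d1) | x = (grow2, d2)].
    move=> x; rewrite Iss_stair //; case/or4P => [/eqP->|/andP[/eqP-> _]|/andP[_ h]|/eqP->];
      solve_r.
  have hr : forall x y, x \in Iss (stair b1 d1 b1 d2) -> y \in Iss (stair b1 d1 b1 d2) ->
     reach x y -> [\/ x = y, x = (grow1, b1) /\ y = (grow1, d1) | x = (grow1, b1) /\ y = (grow2, d2)].
    move=> x y; rewrite !Iss_stair //;
      case/or4P => [/eqP->|/andP[/eqP-> ?]|/andP[/eqP-> ?]|/eqP->];
      case/or4P => [/eqP->|/andP[/eqP-> ?]|/andP[/eqP-> ?]|/eqP->]; solve_h.
  have q1 : (grow1, d1) != (grow2, d2) :> vtx n by neq.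
  have q2 : (grow1, d1) != (grow1, b1) :> vtx n by neq.
  have r1 : reach (grow1, b1) (grow1, d1) by exact: reach_row (leq_trans c2 h3).
  have r2 : reach (grow1, b1) (grow2, d2) by exact: connect_trans (reach_row _ c2) (reach_down _).
  have [m [em hm]] := C_mult fF p1 p2 p3 hS q1 q2 hr r1 r2.
  exists m; split; last by rewrite em.
  exact: dbar_of.
- move=> b1 d1 b2 d2 /and3P [c1 c2 c3] eI s1 s2 t1 t2; subst I s1 s2 t1 t2.
  have h1 : (b2 <= b1)%N by exact: ltnW.
  have h3 : (d2 <= d1)%N by exact: ltnW.
  have fF := Mpath_functor M hI.
  have p1 : (grow1, b1) \in Iss (stair b1 d1 b2 d2) by rewrite Iss_stair // eqxx.
  have p2 : (grow2, b2) \in Iss (stair b1 d1 b2 d2) by rewrite Iss_stair // eqxx c1 !orbT.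
  have p3 : (grow1, d1) \in Iss (stair b1 d1 b2 d2) by rewrite Iss_stair // eqxx c3 orbT.
  have p4 : (grow2, d2) \in Iss (stair b1 d1 b2 d2) by rewrite Iss_stair // eqxx !orbT.
  have hS : forall x, x \in Iss (stair b1 d1 b2 d2) ->
      [\/ x = (grow1, b1), x = (grow2, b2), x = (grow1, d1) | x = (grow2, d2)].
    move=> x; rewrite Iss_stair //; case/or4P => [/eqP->|/andP[/eqP-> _]|/andP[/eqP-> _]|/eqP->];
      solve_r.
  have hr : forall x y, x \in Iss (stair b1 d1 b2 d2) -> y \in Iss (stair b1 d1 b2 d2) ->
     reach x y -> [\/ x = y, x = (grow2, b2) /\ y = (grow2, d2), x = (grow1, b1) /\ y = (grow2, d2)
                  | x = (grow1, b1) /\ y = (grow1, d1)].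
    move=> x y; rewrite !Iss_stair //;
      case/or4P => [/eqP->|/andP[/eqP-> ?]|/andP[/eqP-> ?]|/eqP->];
      case/or4P => [/eqP->|/andP[/eqP-> ?]|/andP[/eqP-> ?]|/eqP->]; solve_h.
  have q1 : (grow2, b2) != (grow1, b1) :> vtx n by neq.
  have q2 : (grow2, b2) != (grow1, d1) :> vtx n by neq.
  have q3 : (grow2, b2) != (grow2, d2) :> vtx n by neq.
  have q4 : (grow1, d1) != (grow1, b1) :> vtx n by neq.
  have q5 : (grow1, d1) != (grow2, b2) :> vtx n by neq.
  have q6 : (grow1, d1) != (grow2, d2) :> vtx n by neq.
  have r1 : reach (grow2, b2) (grow2, d2) by exact: reach_row (leq_trans h1 c2).
  have r2 : reach (grow1, b1) (grow2, d2) by exact: connect_trans (reach_row _ c2) (reach_down _).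
  have r3 : reach (grow1, b1) (grow1, d1) by exact: reach_row (leq_trans c2 h3).
  have [m [em hm]] := D_mult fF p1 p2 p3 p4 hS q1 q2 q3 q4 q5 q6 hr r1 r2 r3.
  exists m; split; last by rewrite em.
  exact: dbar_of.
Qed.
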